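(* Let $G=(N,T,F,P,S)$ be a grounded indexed grammar, let $D$ be a derivation tree of $G$ for a string $s$ with some set of marked positions, and let $H=(v_0,\dots,v_m)$ be a path in $D$ from the root to a leaf (excluding the leaf) containing more than $(|N|\cdot 3^{|N|})^{|N|^2\cdot 3^{|N|}+1}$ branch nodes. Then there are indices $0\le b_1<t_1<t_2\le b_2\le m$ such that: $\sigma(v_{b_1})=\sigma(v_{t_1})$ and $\sigma(v_{t_2})=\sigma(v_{b_2})$; $v_{b_2}\in\beta(v_{b_1})$ and $v_{t_2}\in\beta(v_{t_1})$; $\tau(v_{b_1})=\tau(v_{t_1})$; and there is a branch node among $v_{b_1},\dots,v_{t_1-1}$ or among $v_{t_2},\dots,v_{b_2-1}$.
   Context: An indexed grammar $G=(N,T,F,P,S)$ has finite alphabets $N$ (nonterminals), $T$ (terminals), $F$ (stack symbols), start symbol $S\in N$, and productions of the forms $A\to r$, $A\to Bf$, $Af\to r$ ($A,B\in N$, $f\in F$, $r\in(N\cup T)^*$); a nonterminal carries a stack $x\in F^*$ (written $Ax$, first symbol of $x$ on top), and for $r\in(N\cup T)^*$, $r\{x\}$ is $r$ with each nonterminal $A$ replaced by $Ax$. Applying $A\to r$ to $Ax$ gives $r\{x\}$; applying $A\to Bf$ to $Ax$ gives $Bfx$; applying $Af\to r$ to $Afy$ gives $r\{y\}$. $G$ is grounded if there is $\$\in F$ such that every production has one of the forms $S\to A\$$, $A\to r$, $A\to Bf$, $Af\to r$, $A\$\to s$ with $A,B\in N\setminus\{S\}$, $f\in F\setminus\{\$\}$,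 $r\in(N\setminus\{S\})^+$, $s\in T^*$. A derivation tree $D$ for $s\in T^*$ is an ordered rooted tree whose internal nodes are labelled in $NF^*$ and whose leaves are labelled in $T^*$; the root is labelled $S$ (empty stack); each internal node labelled $Ax$ has as children, in order, the result of applying one production of $G$ to $Ax$ (internal children labelled by the nonterminals-with-stacks produced, or, for a production $A\$\to s'$ with $x=\$$, a single leaf labelled $s'$); the concatenation of leaf labels from left to right is $s$. Given a set of marked positions of $s$: a leaf is marked if its label contains a marked position of $s$; an internal node is marked if it has a marked descendant; a branch node is a node with more than one marked child. A path is a list of nodes $(v_0,\dots,v_m)$, $m\ge 0$, with $v_i$ a child of $v_{i-1}$. For an internal node $v$ labelled $Ax$: $\sigma(v)=A$ and $\eta(v)=|x|$. A node $v'$ is in the scope of $v$ iff $v'$ is internal and there is a path from $v$ to $v'$ all of whose nodes $v''$ (including $v'$) satisfy $\eta(v'')\ge\eta(v)$. $\beta(v)$ is the set of nodes $v'$ in the scope of $v$ such that no child of $v'$ is in the scope of $v$. $\tau(v)$ is the triple $(\tau_1,\tau_2,\tau_3)$ where $\tau_1=\{A\in N:\sigma(v')\neq A$ for all $v'\in\beta(v)\}$, $\tau_2=\{A\in N:\sigma(v')=A$ for some $v'\in\beta(v)$ and $\sigma(v')\ne A$ for all marked $v'\in\beta(v)\}$, $\tau_3=\{A\in N:\sigma(v')=A$ for some marked $v'\in\beta(v)\}$. *)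

(* Defs.v *)
From Stdlib Require List.
From mathcomp Require Import all_boot.
Set Implicit Arguments.
Unset Strict Implicit.
Unset Printing Implicit Defensive.

Section IndexedGrammars.
Variables (N T F : finType).

(* Productions of an indexed grammar:
   PRule A r   :  A -> r
   PPush A B f :  A -> B f
   PPop A f r  :  A f -> r        (r in (N u T)^* ) *)
Inductive production :=
| PRule of N & seq (N + T)
| PPush of N & N & F
| PPop of N & F & seq (N + T).

(* G = (N, T, F, P, S); the finite set P is given as a list. *)
Record grammar := Grammar { g_start : N ; g_prods : seq production }.

Definition nonterm_plus (S : N) (r : seq (N + T)) : Prop :=
  exists bs : seq N, r = map inl bs /\ bs <> [::] /\ ~ List.In S bs.

Definition term_star (r : seq (N + T)) : Prop :=
  exists w : seq T, r = map inr w.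

(* G is grounded, with witness stack symbol d (the "$"). *)
Definition grounded_by (G : grammar) (d : F) : Prop :=
  let S := g_start G in
  forall p, List.In p (g_prods G) ->
  match p with
  | PPush A B f => (A = S /\ B <> S /\ f = d) \/ (A <> S /\ B <> S /\ f <> d)
  | PRule A r => A <> S /\ nonterm_plus S r
  | PPop A f r => A <> S /\ ((f <> d /\ nonterm_plus S r) \/ (f = d /\ term_star r))
  end.

Definition grounded (G : grammar) : Prop := exists d, grounded_by G d.

(* Derivation trees: internal nodes labelled A x (A in N, x in F^*, top first),
   leaves labelled by strings in T^*. *)
Inductive dtree :=
| Leaf of seq T
| Node of N & seq F & seq dtree.

Definition label (t : dtree) : option (N * seq F) :=
  match t with Leaf _ => None | Node A x _ => Some (A, x) end.

Definition applies (d : F) (p : production) (A : N) (x : seq F) (ch : seq dtree) : Prop :=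
  match p with
  | PRule A' r => A' = A /\
      exists bs : seq N, r = map inl bs /\ map label ch = map (fun B => Some (B, x)) bs
  | PPush A' B f => A' = A /\ map label ch = [:: Some (B, f :: x)]
  | PPop A' f r => A' = A /\ exists y, x = f :: y /\
      ((f = d /\ y = [::] /\ exists w : seq T, r = map inr w /\ ch = [:: Leaf w])
       \/ (f <> d /\ exists bs : seq N, r = map inl bs /\
                       map label ch = map (fun B => Some (B, y)) bs))
  end.

Fixpoint valid (G : grammar) (d : F) (t : dtree) : Prop :=
  match t with
  | Leaf _ => True
  | Node A x ch =>
      (exists p, List.In p (g_prods G) /\ applies d p A x ch) /\
      foldr (fun c P => valid G d c /\ P) True ch
  end.

Fixpoint yield (t : dtree) : seq T :=
  match t with
  | Leaf w => w
  | Node _ _ ch => flatten (map yield ch)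
  end.

Definition derivation_tree (G : grammar) (d : F) (s : seq T) (D : dtree) : Prop :=
  valid G d D /\ label D = Some (g_start G, [::]) /\ yield D = s.

(* Nodes are addressed by lists of child indices (0-based) from the root. *)
Fixpoint sub (t : dtree) (a : seq nat) {struct a} : option dtree :=
  match a with
  | [::] => Some t
  | i :: a' =>
      match t with
      | Leaf _ => None
      | Node _ _ ch => if onth ch i is Some c then sub c a' else None
      end
  end.

Definition lab (D : dtree) (v : seq nat) : option (N * seq F) := obind label (sub D v).

(* sigma(v) (None if v is not an internal node) *)
Definition sigma (D : dtree) (v : seq nat) : option N := omap fst (lab D v).

(* position in the yield of the first symbol below node at address a *)
Fixpoint offset (t : dtree) (a : seq nat) {struct a} : nat :=
  match a, t with
  | i :: a', Node _ _ ch =>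
      size (flatten (map yield (take i ch))) +
      (if onth ch i is Some c then offset c a' else 0)
  | _, _ => 0
  end.

Definition leaf_marked (s : seq T) (M : {set 'I_(size s)}) (D : dtree) (v : seq nat) : Prop :=
  exists w, sub D v = Some (Leaf w) /\
  exists k : 'I_(size s), k \in M /\ offset D v <= k < offset D v + size w.

Definition marked (s : seq T) (M : {set 'I_(size s)}) (D : dtree) (v : seq nat) : Prop :=
  leaf_marked M D v \/
  (lab D v <> None /\ exists c, c <> [::] /\ leaf_marked M D (v ++ c)).

Definition branch_node (s : seq T) (M : {set 'I_(size s)}) (D : dtree) (v : seq nat) : Prop :=
  exists i j, i <> j /\ marked M D (rcons v i) /\ marked M D (rcons v j).

(* H = (v_0,...,v_m) is a path from the root to a leaf (leaf excluded):
   v_i is the node at address [take i a], m = size a, and some child of v_m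
   is a leaf. *)
Definition root_leaf_path (D : dtree) (a : seq nat) : Prop :=
  exists j w, sub D (rcons a j) = Some (Leaf w).

(* v' in the scope of v: v' internal and every node v'' on the (unique) path
   from v to v' (both included) satisfies eta(v'') >= eta(v). *)
Definition in_scope (D : dtree) (v v' : seq nat) : Prop :=
  exists A x, lab D v = Some (A, x) /\
  exists c, v' = v ++ c /\
  forall k, k <= size c -> exists B y, lab D (v ++ take k c) = Some (B, y) /\ size x <= size y.

Definition in_beta (D : dtree) (v v' : seq nat) : Prop :=
  in_scope D v v' /\ forall j, ~ in_scope D v (rcons v' j).

Definition tau (s : seq T) (M : {set 'I_(size s)}) (D : dtree) (v : seq nat)
  : (N -> Prop) * (N -> Prop) * (N -> Prop) :=
  ((fun A => forall v', in_beta D v v' -> sigma D v' <> Some A),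
   (fun A => (exists v', in_beta D v v' /\ sigma D v' = Some A) /\
             (forall v', in_beta D v v' -> marked M D v' -> sigma D v' <> Some A)),
   (fun A => exists v', in_beta D v v' /\ marked M D v' /\ sigma D v' = Some A)).

End IndexedGrammars.

(* Main.v *)
Require Import Defs.
From mathcomp Require Import all_boot zify.
Set Implicit Arguments.
Unset Strict Implicit.
Unset Printing Implicit Defensive.

Section Abs.
Variables (m : nat) (h : nat -> nat) (bp : nat -> bool).
Hypothesis Hstep : forall k, k < m -> h k.+1 <= (h k).+1.

Definition ee i := i + find (fun j => h j.+1 < h i) (iota i (m - i)).

Lemma ee_ge i : i <= ee i.
Proof. by rewrite /ee leq_addr. Qed.

Lemma ee_le i : i <= m -> ee i <= m.
Proof.
move=> im; rewrite /ee.
have := find_size (fun j => h j.+1 < h i) (iota i (m - i)).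
rewrite size_iota; lia.
Qed.

Lemma ee_big i : m <= i -> ee i = i.
Proof. by move=> mi; rewrite /ee (_ : m - i = 0) ?addn0 //; lia. Qed.

Lemma ee_min i k : i <= k <= ee i -> h i <= h k.
Proof.
move=> /andP[ik ke].
case: (ltnP i k) => [lik|kli]; last by have -> : k = i by lia.
have Hf : (k - i).-1 < find (fun j => h j.+1 < h i) (iota i (m - i)) by rewrite /ee in ke; lia.
have Hs : (k - i).-1 < m - i.
  have := find_size (fun j => h j.+1 < h i) (iota i (m - i)); rewrite size_iota; lia.
have := before_find 0 Hf; rewrite nth_iota //.
have -> : (i + (k - i).-1).+1 = k by lia.
by move/negbT; rewrite -leqNgt.
Qed.

Lemma ee_drop i : ee i < m -> h (ee i).+1 < h i.
Proof.
move=> em.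
have Hf : find (fun j => h j.+1 < h i) (iota i (m - i)) < size (iota i (m - i)).
  rewrite size_iota; rewrite /ee in em; lia.
have Hf' := Hf; rewrite size_iota in Hf'.
rewrite -has_find in Hf.
by have := nth_find 0 Hf; rewrite nth_iota.
Qed.

Lemma ee_nest i j : i <= m -> i <= j <= ee i -> ee j <= ee i.
Proof.
move=> im /andP[ij je]; rewrite leqNgt; apply/negP => lt.
have jm : j <= m by have := ee_le im; lia.
have eim : ee i < m by have := ee_le jm; lia.
have := ee_drop eim.
have := ee_min (i:=i) (k:=j); rewrite ij je => /(_ isT) hij.
have := ee_min (i:=j) (k:=(ee i).+1).
have -> : j <= (ee i).+1 <= ee j by apply/andP; split; lia.
move=> /(_ isT); lia.
Qed.

Lemma ee_ext i j : i <= m -> i <= j <= ee i -> h j <= h i -> ee i <= ee j.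
Proof.
move=> im /andP[ij je] hji; rewrite leqNgt; apply/negP => lt.
have jm : j <= m by have := ee_le im; lia.
have ejm : ee j < m by have := ee_le im; lia.
have := ee_drop ejm.
have := ee_min (i:=i) (k:=(ee j).+1).
have -> : i <= (ee j).+1 <= ee i by have := ee_ge j; move=> ?; apply/andP; split; lia.
move=> /(_ isT); lia.
Qed.

Definition Wp i := fun k => bp k && (i <= k < ee i).
Definition cnt i := count (Wp i) (iota 0 m).
Definition R i j := [&& i < j, j <= ee i & has (fun k => Wp i k && ~~ Wp j k) (iota 0 m)].

Lemma Wp_desc i j k : i <= m -> i <= j <= ee i -> Wp j k -> Wp i k.
Proof.
move=> im ije; have := ee_nest im ije; move: ije.
rewrite /Wp => /andP[ij _] ne /and3P[-> jk ke] /=; apply/andP; split; lia.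
Qed.

Lemma R_bound i j : R i j -> i < m.
Proof.
case/and3P=> ij je _; rewrite ltnNge; apply/negP => mi.
by move: je; rewrite ee_big //; lia.
Qed.

Lemma R_trans : transitive R.
Proof.
move=> j i l Rij Rjl.
have im := ltnW (R_bound Rij); have jm := ltnW (R_bound Rjl).
case/and3P: Rij => ij je /hasP[k kin /andP[wik nwjk]].
case/and3P: Rjl => jl le _.
have := ee_nest im (j:=j); rewrite (ltnW ij) je => /(_ isT) ne.
apply/and3P; split; [lia|lia|].
apply/hasP; exists k => //; rewrite wik /=.
apply: contra nwjk; apply: Wp_desc => //; apply/andP; split; lia.
Qed.

Lemma Wp_lt i k : i <= m -> Wp i k -> k < m.
Proof. by move=> im /and3P[_ _ ke]; have := ee_le im; lia. Qed.

Lemma nonstrict i c : i <= m -> ~~ has (fun k => Wp i k && ~~ Wp c k) (iota 0 m) -> cnt i <= cnt c.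
Proof.
move=> im /hasPn H; apply: sub_count => k wk.
have : k \in iota 0 m by rewrite mem_iota add0n (Wp_lt im wk).
by move/H; rewrite wk /= negbK.
Qed.

Lemma count_or (a b : pred nat) s : count (fun k => a k || b k) s <= count a s + count b s.
Proof. by rewrite -count_predUI leq_addr. Qed.

Lemma count1 i : count (fun k => k == i) (iota 0 m) <= 1.
Proof.
have := count_uniq_mem i (iota_uniq 0 m).
rewrite (eq_count (a2 := fun k => k == i)) => [->|k]; first by case: (_ \in _).
by rewrite /= eq_sym.
Qed.

Lemma lift_R i c j : i <= m -> i < c <= ee i -> R c j -> R i j.
Proof.
move=> im /andP[ic ce] /and3P[cj je /hasP[k kin /andP[wck nwjk]]].
have := ee_nest im (j:=c); rewrite (ltnW ic) ce => /(_ isT) ne.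
apply/and3P; split; [lia|lia|].
apply/hasP; exists k => //; rewrite nwjk andbT.
by apply: Wp_desc wck => //; apply/andP; split; lia.
Qed.

Lemma key f : forall n i, ee i - i < n -> i <= m -> f.*2.+2 <= cnt i ->
  exists j, R i j /\ f <= cnt j.
Proof.
elim=> [//|n IH] i hn im hc.
have : 0 < cnt i by lia.
rewrite /cnt -has_count => /hasP[k0 _ /and3P[_ ik0 k0e]].
have iei : i < ee i by lia.
have eim := ee_le im.
have c1m : i.+1 <= m by lia.
have n1 : ee i.+1 <= ee i by apply: ee_nest => //; apply/andP; split; lia.
have Rc1 : has (fun k => Wp i k && ~~ Wp i.+1 k) (iota 0 m) -> R i i.+1.
  by move=> H; apply/and3P; split => //; lia.
have use_IH : forall c, i < c <= ee i -> cnt i <= cnt c ->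
     exists j, R i j /\ f <= cnt j.
  move=> c /andP[ic ce] hic.
  have ec : ee c <= ee i by apply: ee_nest => //; apply/andP; split; lia.
  have [j [Rj fj]] := IH c ltac:(lia) ltac:(lia) ltac:(lia).
  by exists j; split => //; apply: lift_R Rj => //; apply/andP; split.
case: (ltnP (ee i.+1) (ee i)) => [lt|ge].
- (* two children *)
  have c2m : (ee i.+1).+1 <= m by lia.
  have e1m : ee i.+1 < m by lia.
  have h1 := ee_drop e1m.
  have g1 := ee_ge i.+1.
  have h2 := Hstep (leq_trans iei eim).
  have h3 : h i <= h (ee i.+1).+1 by apply: ee_min; apply/andP; split; lia.
  have e2 : ee (ee i.+1).+1 = ee i.
    apply/eqP; rewrite eqn_leq; apply/andP; split.
      by apply: ee_nest => //; apply/andP; split; lia.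
    by apply: ee_ext => //; [apply/andP; split; lia | lia].
  have hsum : cnt i <= 1 + cnt i.+1 + 1 + cnt (ee i.+1).+1.
    have H : cnt i <= count (fun k => ((k == i) || Wp i.+1 k) || ((k == ee i.+1) || Wp (ee i.+1).+1 k)) (iota 0 m).
      apply: sub_count => k /and3P[bk ik ke].
      rewrite /Wp bk e2 /=.
      lia.
    apply: (leq_trans H); apply: (leq_trans (count_or _ _ _)).
    have := count_or (fun k => k == i) (Wp i.+1) (iota 0 m).
    have := count_or (fun k => k == ee i.+1) (Wp (ee i.+1).+1) (iota 0 m).
    have := count1 i; have := count1 (ee i.+1); rewrite /cnt => hY hX hB hA.
    apply: leq_trans (leq_add hA hB) _.
    by rewrite -!addnA leq_add // addnCA; rewrite addnCA leq_add2l leq_add2r.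
  case s1: (has (fun k => Wp i k && ~~ Wp i.+1 k) (iota 0 m)); last first.
    apply: (use_IH i.+1); first (apply/andP; split; lia).
    by apply: nonstrict => //; rewrite s1.
  case s2: (has (fun k => Wp i k && ~~ Wp (ee i.+1).+1 k) (iota 0 m)); last first.
    apply: (use_IH (ee i.+1).+1); first (apply/andP; split; lia).
    by apply: nonstrict => //; rewrite s2.
  case: (leqP f (cnt i.+1)) => f1.
    by exists i.+1; split => //; apply: Rc1.
  exists (ee i.+1).+1; split; last by move: hc hsum f1; rewrite -muln2; rewrite -/(cnt (ee i.+1).+1); lia.
  by apply/and3P; split => //; lia.
- have e1 : ee i.+1 = ee i by apply/eqP; rewrite eqn_leq n1 ge.
  have hsum : cnt i <= 1 + cnt i.+1.
    have H : cnt i <= count (fun k => (k == i) || Wp i.+1 k) (iota 0 m).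
      apply: sub_count => k /and3P[bk ik ke].
      rewrite /Wp bk e1 /=; lia.
    apply: (leq_trans H); apply: (leq_trans (count_or _ _ _)).
    by rewrite leq_add2r count1.
  case s1: (has (fun k => Wp i k && ~~ Wp i.+1 k) (iota 0 m)); last first.
    apply: (use_IH i.+1); first (apply/andP; split; lia).
    by apply: nonstrict => //; rewrite s1.
  exists i.+1; split; first by apply: Rc1.
  by move: hc hsum; rewrite -/(cnt i.+1) -muln2; lia.
Qed.

Fixpoint fn n := if n is n'.+1 then (fn n').*2.+2 else 1.

Lemma fn_pos n : 0 < fn n. Proof. by case: n. Qed.

Lemma chain n : forall i, i <= m -> fn n <= cnt i ->
  exists s, [/\ size s = n, sorted R (i :: s) & all (fun j => (j <= m) && (0 < cnt j)) (i :: s)].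
Proof.
elim: n => [|n IH] i im hc.
  by exists [::]; split => //=; rewrite im /=; have := fn_pos 0; lia.
have [j [Rij hj]] := key (n:=(ee i - i).+1) (ltnSn _) im hc.
have jm : j <= m by case/and3P: Rij => _ je _; have := ee_le im; lia.
have [s [ss so al]] := IH j jm hj.
exists (j :: s); split => //=; first by rewrite ss.
  by rewrite Rij.
rewrite im /=; have := fn_pos n.+1; rewrite -/(cnt i); rewrite /= in al.
move=> hp; rewrite (leq_trans hp hc) /=; exact: al.
Qed.
End Abs.
Section Tree.
Variables (N T F : finType).
Implicit Types (D t : dtree N T F) (G : grammar N T F) (d : F) (ch : seq (dtree N T F)).

Lemma sub_cat D u v : sub D (u ++ v) = obind (fun t => sub t v) (sub D u).
Proof.
elim: u D => [|i u IH] [w|A x ch] //=.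
by case: (onth ch i) => //= c; rewrite IH.
Qed.

Lemma sub_child D v A x ch j : sub D v = Some (Node A x ch) -> sub D (rcons v j) = onth ch j.
Proof. by move=> H; rewrite -cats1 sub_cat H /=; case: (onth ch j). Qed.

Lemma foldr_valid G d ch j c : foldr (fun c P => valid G d c /\ P) True ch -> onth ch j = Some c -> valid G d c.
Proof.
elim: ch j => [|c0 ch IH] [|j] //= [H1 H2]; first by case=> <-.
exact: IH.
Qed.

Lemma valid_sub G d D u t : valid G d D -> sub D u = Some t -> valid G d t.
Proof.
elim: u D => [|i u IH] [w|A x ch] //=; try by move=> ? [<-].
move=> [_ Hf]; case E: (onth ch i) => [c|//] Hs.
exact: IH (foldr_valid Hf E) Hs.
Qed.

Lemma onth_map_inv (B : Type) (g : B -> option (N * seq F)) bs j o :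
  onth (map g bs) j = Some o -> exists b, o = g b.
Proof. by rewrite onth_map; case: (onth bs j) => //= b [<-]; exists b. Qed.

Lemma applies_shape d p A x ch : applies d p A x ch ->
  (exists z : seq F, size z <= (size x).+1 /\
     forall j c, onth ch j = Some c -> exists B, label c = Some (B, z)) \/
  (forall j c, onth ch j = Some c -> label c = None).
Proof.
have gen : forall z : seq F, (exists bs : seq N, map (@label N T F) ch = map (fun B => Some (B, z)) bs) ->
    forall j c, onth ch j = Some c -> exists B, label c = Some (B, z).
  move=> z [bs E] j c Hc.
  have : onth (map (@label N T F) ch) j = Some (label c) by rewrite onth_map Hc.
  by rewrite E => /onth_map_inv [B ->]; exists B.
case: p => [A' r|A' B f|A' f r] /=.
- case=> _ [bs [_ E]]; left; exists x; split => //; apply: gen; by exists bs.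
- case=> _ E; left; exists (f :: x); split => //; apply: gen; by exists [:: B].
- case=> _ [y [-> [[_ [_ [w [_ ->]]]] | [_ [bs [_ E]]]]]].
    by right=> [[|[|j]]] c //= [<-].
  left; exists y; split; first by rewrite /=; lia.
  by apply: gen; exists bs.
Qed.

Section Path.
Variables (G : grammar N T F) (d : F) (D : dtree N T F) (a : seq nat) (j0 : nat) (w0 : seq T).
Hypothesis Hval : valid G d D.
Hypothesis Hroot : label D = Some (g_start G, [::]).
Hypothesis Hleaf : sub D (rcons a j0) = Some (Leaf N F w0).

Lemma path_node k : k <= size a -> exists A x ch, sub D (take k a) = Some (Node A x ch).
Proof.
move=> ka.
have E : rcons a j0 = take k a ++ (drop k a ++ [:: j0]) by rewrite catA cat_take_drop cats1.
move: Hleaf; rewrite E sub_cat; case: (sub D (take k a)) => [[w|A x ch]|] //=.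
  by case: (drop k a).
by move=> _; exists A, x, ch.
Qed.

Definition hh k := if lab D (take k a) is Some (_, x) then size x else 0.
Definition sg k := if lab D (take k a) is Some (A, _) then A else g_start G.

Lemma node_lab k : k <= size a -> exists x, lab D (take k a) = Some (sg k, x) /\ size x = hh k.
Proof.
move=> /path_node [A [x [ch E]]]; exists x; by rewrite /sg /hh /lab E.
Qed.

Lemma sigma_path k : k <= size a -> sigma D (take k a) = Some (sg k).
Proof. by move=> /node_lab [x [E _]]; rewrite /sigma E. Qed.

Lemma hh0 : hh 0 = 0.
Proof. by rewrite /hh take0 /lab /= Hroot. Qed.

Lemma hstep k : k < size a -> hh k.+1 <= (hh k).+1.
Proof.
move=> ka.
have [A [x [ch E]]] := path_node (ltnW ka).
have [y [Ey _]] := node_lab ka.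
have Hv := valid_sub Hval E; case: Hv => [[p [_ Hp]] _].
have Es := sub_child (nth 0 a k) E; rewrite -take_nth // in Es.
move: Ey; rewrite /hh /lab Es.
case Ec: (onth ch (nth 0 a k)) => [c|//] /= Ey; rewrite Ey.
case: (applies_shape Hp) => [[z [hz Hz]]|Hn].
  have [B HB] := Hz _ _ Ec; move: Ey; rewrite HB => [[_ <-]].
  move: E; rewrite /lab => ->; done.
by move: Ey; rewrite (Hn _ _ Ec).
Qed.

Lemma child_lab v A x ch j : sub D v = Some (Node A x ch) -> lab D (rcons v j) = obind (@label N T F) (onth ch j).
Proof. by move=> E; rewrite /lab (sub_child j E). Qed.

Lemma beta_path i : i <= size a -> in_beta D (take i a) (take (ee (size a) hh i) a).
Proof.
move=> ia.
set e := ee (size a) hh i.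
have ie : i <= e by apply: ee_ge.
have ea : e <= size a by apply: ee_le.
have [x [Ex hx]] := node_lab ia.
split.
  exists (sg i), x; split => //; exists (take (e - i) (drop i a)); split.
    by rewrite -takeD subnKC.
  move=> k; rewrite size_takel ?size_drop; last by lia.
  move=> ke; rewrite take_takel // -takeD.
  have [y [Ey hy]] := node_lab (k := i + k) ltac:(lia).
  exists (sg (i + k)), y; split => //; rewrite hy hx.
  by apply: (ee_min (m := size a)); rewrite -/e; apply/andP; split; lia.
move=> j [A' [x' [Ex' [c [Ec Hc]]]]].
have := Hc (size c) (leqnn _); rewrite take_size -Ec => [[B [y [Ey hy]]]].
move: Ex'; rewrite Ex => [[_ Exx]]; rewrite -Exx in hy.
have [A2 [x2 [ch En]]] := path_node ea.
have [[p [_ Hp]] _] := valid_sub Hval En.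
move: Ey; rewrite (child_lab j En); case Ec1: (onth ch j) => [c1|//] /= Ey.
case: (applies_shape Hp) => [[z [_ Hz]]|Hn]; last by move: Ey; rewrite (Hn _ _ Ec1).
have [B1 HB1] := Hz _ _ Ec1; move: Ey; rewrite HB1 => [[_ Ezy]].
case: (ltnP e (size a)) => [lt|ge].
  have hd := ee_drop lt; rewrite -/e in hd.
  have [y' [Ey' hy']] := node_lab lt.
  move: Ey'; rewrite (take_nth 0 lt) (child_lab _ En).
  case Ec2: (onth ch (nth 0 a e)) => [c2|//] /= Ey'.
  have [B2 HB2] := Hz _ _ Ec2; move: Ey'; rewrite HB2 => [[_ Ezy']].
  move: hy; rewrite -Ezy Ezy' hy'; lia.
have eq : e = size a by lia.
have := sub_child j0 En; rewrite eq take_size Hleaf => Hl.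
by have [B3] := Hz _ _ (esym Hl).
Qed.
End Path.
End Tree.
From Stdlib Require Import ClassicalEpsilon FunctionalExtensionality PropExtensionality.

Definition pb (P : Prop) : bool := if excluded_middle_informative P then true else false.
Lemma pbE (P : Prop) : pb P = true <-> P.
Proof. by rewrite /pb; case: excluded_middle_informative. Qed.

Definition code3 (b1 b2 : bool) : 'I_3 :=
  if b1 then @Ordinal 3 2 isT else if b2 then @Ordinal 3 1 isT else @Ordinal 3 0 isT.

Lemma code3_inj b1 b2 c1 c2 : code3 b1 b2 = code3 c1 c2 -> b1 = c1 /\ (b1 = false -> b2 = c2).
Proof. by move/(congr1 val); case: b1; case: b2; case: c1; case: c2. Qed.

Section Tau.
Variables (N T F : finType) (s : seq T) (M : {set 'I_(size s)}) (D : dtree N T F).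

Definition Pb v A := exists v', in_beta D v v' /\ sigma D v' = Some A.
Definition Qb v A := exists v', in_beta D v v' /\ marked M D v' /\ sigma D v' = Some A.
Definition tcode v : {ffun N -> 'I_3} := [ffun A => code3 (pb (Qb v A)) (pb (Pb v A))].

Lemma tcode_tau v1 v2 : tcode v1 = tcode v2 -> tau M D v1 = tau M D v2.
Proof.
move=> E.
have H : forall A, (Qb v1 A <-> Qb v2 A) /\ (Pb v1 A <-> Pb v2 A).
  move=> A; have := congr1 (fun f : {ffun N -> 'I_3} => f A) E; rewrite !ffunE => /code3_inj [e1 e2].
  have hq : Qb v1 A <-> Qb v2 A.
    by split=> q; apply/pbE; [rewrite -e1 | rewrite e1]; apply/pbE.
  split => //.
  case: (excluded_middle_informative (Qb v1 A)) => q1.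
    have q2 : Qb v2 A by apply/hq.
    case: q1 => v' [? [? ?]]; case: q2 => v'' [? [? ?]].
    by split=> _; [exists v'' | exists v'].
  have : pb (Qb v1 A) = false by case E1: (pb _) => //; move/pbE: E1.
  by move/e2 => e3; split=> q; apply/pbE; [rewrite -e3 | rewrite e3]; apply/pbE.
have t1 : forall v A, (forall v', in_beta D v v' -> sigma D v' <> Some A) <-> ~ Pb v A.
  move=> v A; split; first by move=> H1 [v' [H2 H3]]; exact: H1 H2 H3.
  by move=> H1 v' H2 H3; apply: H1; exists v'.
have t2 : forall v A, (forall v', in_beta D v v' -> marked M D v' -> sigma D v' <> Some A) <-> ~ Qb v A.
  move=> v A; split; first by move=> H1 [v' [H2 [H3 H4]]]; exact: H1 H2 H3 H4.
  by move=> H1 v' H2 H3 H4; apply: H1; exists v'.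
rewrite /tau; congr (_, _, _); apply: functional_extensionality => A;
  apply: propositional_extensionality; have [hq hp] := H A.
- by rewrite !t1; split => nP P; apply: nP; apply/hp.
- rewrite /= -/(Pb v1 A) -/(Pb v2 A) !t2; split => [[p nq]|[p nq]]; split.
  + by apply/hp.
  + by move=> q; apply: nq; apply/hq.
  + by apply/hp.
  + by move=> q; apply: nq; apply/hq.
- exact: hq.
Qed.
End Tau.

Lemma fn_le n : (fn n).+2 <= 3 * 2 ^ n.
Proof. elim: n => [//|n IH] /=; rewrite expnS; lia. Qed.

Lemma pow_le K n : 2 <= K -> 2 ^ n <= K ^ n.
Proof. by move=> hK; elim: n => // n IH; rewrite !expnS leq_mul. Qed.

Theorem lemma1 (N T F : finType) (G : grammar N T F) (d : F) (s : seq T)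
  (D : dtree N T F) (M : {set 'I_(size s)}) (a : seq nat) :
  grounded_by G d ->
  derivation_tree G d s D ->
  root_leaf_path D a ->
  (exists idx : seq nat,
     uniq idx /\
     (#|N| * 3 ^ #|N|) ^ (#|N| ^ 2 * 3 ^ #|N| + 1) < size idx /\
     forall i, i \in idx -> i <= size a /\ branch_node M D (take i a)) ->
  exists b1 t1 t2 b2 : nat,
    [/\ b1 < t1, t1 < t2, t2 <= b2 & b2 <= size a] /\
    sigma D (take b1 a) = sigma D (take t1 a) /\
    sigma D (take t2 a) = sigma D (take b2 a) /\
    in_beta D (take b1 a) (take b2 a) /\
    in_beta D (take t1 a) (take t2 a) /\
    tau M D (take b1 a) = tau M D (take t1 a) /\
    ((exists i, b1 <= i < t1 /\ branch_node M D (take i a)) \/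
     (exists i, t2 <= i < b2 /\ branch_node M D (take i a))).
Proof.
move=> _ [Hval [Hroot _]] [j0 [w0 Hleaf]] [idx [uidx [hsz hidx]]].
set m := size a.
set h := hh D a.
pose bp k := pb (branch_node M D (take k a)).
have Hstep : forall k, k < m -> h k.+1 <= (h k).+1 by move=> k; apply: (hstep Hval Hleaf).
have ee0 : ee m h 0 = m.
  rewrite /ee hasNfind ?size_iota ?subn0 //; apply/hasPn => j _.
  by rewrite /h (hh0 _ Hroot).
set n := #|N| ^ 2 * 3 ^ #|N|.
have N0 : 0 < #|N| by apply/card_gt0P; exists (g_start G).
have K3 : 3 <= #|N| * 3 ^ #|N|.
  have : 3 ^ 1 <= 3 ^ #|N| by apply: leq_pexp2l.
  by rewrite expn1 => h3; apply: leq_trans h3 _; rewrite leq_pmull.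
have fnb : fn n <= size idx - 1.
  have := fn_le n; have := pow_le n (leq_trans (isT : 2 <= 3) K3).
  move: hsz; rewrite addn1 expnS; set K := #|N| * 3 ^ #|N|; set P := K ^ n.
  move=> hs hp hf.
  have : 3 * 2 ^ n <= K * P by apply: leq_mul.
  lia.
have c0 : size idx - 1 <= cnt m h bp 0.
  pose idx' := filter (fun k => k != m) idx.
  have s1 : size idx' <= cnt m h bp 0.
    rewrite /cnt -size_filter; apply: uniq_leq_size; first by rewrite filter_uniq.
    move=> k; rewrite mem_filter => /andP[km ki].
    have [ka kb] := hidx k ki.
    rewrite mem_filter mem_iota add0n /= /Wp ee0.
    have kltm : k < m by rewrite ltn_neqAle km ka.
    by rewrite kltm /= !andbT; apply/pbE.
  have e2 : size idx' + count_mem m idx = size idx.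
    rewrite size_filter -(count_predC (fun k => k != m) idx); congr (_ + _).
    by apply: eq_count => k0 /=; rewrite negbK.
  have := count_uniq_mem m uidx.
  have : (m \in idx) <= 1 by case: (m \in idx).
  lia.
have [L [sL soL alL]] := chain Hstep (i := 0) (n := n) (leq0n _) (leq_trans fnb c0).
pose cls k := (sg G D a k, tcode M D (take k a), sg G D a (ee m h k)).
have nu : ~~ uniq (map cls (0 :: L)).
  apply/negP => /card_uniqP u.
  have := max_card (mem (map cls (0 :: L))).
  rewrite u size_map /= sL !card_prod card_ffun !card_ord -/n.
  rewrite /n; lia.
have [p [q [pq qs E]]] := uniqPn (cls 0) nu.
rewrite size_map in qs.
have ps : p < size (0 :: L) by lia.
rewrite !(nth_map 0) // in E.
set b1 := nth 0 (0 :: L) p in E; set t1 := nth 0 (0 :: L) q in E.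
have Rbt : R m h bp b1 t1.
  by apply: (sorted_ltn_nth (@R_trans m h bp) 0 soL) => //; rewrite inE.
have /andP [b1m _] : (b1 <= m) && (0 < cnt m h bp b1) by apply: (all_nthP 0 alL).
have /andP [t1m ct1] : (t1 <= m) && (0 < cnt m h bp t1) by apply: (all_nthP 0 alL).
case/and3P: Rbt => bt tb /hasP [k _ /andP [wbk nwtk]].
have tt2 : t1 < ee m h t1.
  move: ct1; rewrite /cnt -has_count => /hasP [k' _ /and3P [_ ? ?]]; lia.
have t2b2 : ee m h t1 <= ee m h b1 by apply: ee_nest => //; apply/andP; split; lia.
have b2m : ee m h b1 <= m by apply: ee_le.
case: E => E1 E2 E3.
exists b1, t1, (ee m h t1), (ee m h b1); split; first by split.
have t2m : ee m h t1 <= m by lia.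
rewrite (sigma_path G Hleaf b1m) (sigma_path G Hleaf t1m) E1.
rewrite (sigma_path G Hleaf t2m) (sigma_path G Hleaf b2m) E3.
split => //; split => //.
split; first exact: (beta_path Hval Hleaf b1m).
split; first exact: (beta_path Hval Hleaf t1m).
split; first exact: tcode_tau.
move: wbk nwtk; rewrite /Wp => /and3P [bk k1 k2].
rewrite bk /= => nk.
have Bk : branch_node M D (take k a) by apply/pbE.
case: (ltnP k t1) => kt.
  by left; exists k; split => //; apply/andP.
by right; exists k; split => //; apply/andP; split => //; move: nk; rewrite kt /= -leqNgt.
Qed.
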